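(* Let $L$ be a pretransitive logic, $k\le\omega$, and let $\mathfrak F=(W,(R_i)_{i<n})$ be the $k$-canonical frame of $L$. If $x\in W$ and $\varphi$ is a $k$-formula with $\varphi\in x$, then the set $R^*_{\mathfrak F}(x)\cap\{y\in W\mid \varphi\in y\}$ has a maximal element.
   Context: Logics are normal $n$-modal logics (sets of formulas over $p_0,p_1,\dots$, $\to,\bot$, $\Diamond_i$ ($i<n$), containing tautologies, $\Diamond_i(p\vee q)\to\Diamond_ip\vee\Diamond_iq$, $\neg\Diamond_i\bot$, closed under modus ponens, substitution and monotonicity). A $k$-formula uses only variables $p_j$, $j<k$. With $\Diamond^0\varphi=\varphi$, $\Diamond^{i+1}\varphi=\Diamond^i(\bigvee_{j<n}\Diamond_j\varphi)$, $\Diamond^{\le m}\varphi=\bigvee_{i\le m}\Diamond^i\varphi$, a logic is pretransitive if it contains $\Diamond^{m+1}p\to\Diamond^{\le m}p$ for some $m$. For a consistent logic $L$, the $k$-canonical frame has as points the maximal $L$-consistent sets of $k$-formulas, with $xR_iy$ iff $\Diamond_i\psi\in x$ for every $k$-formula $\psi\in y$. For a frame, $R_{\mathfrak F}=\bigcup_{i<n}R_i$, $R^*_{\mathfrak F}$ is its reflexive transitive closure, and $R^*_{\mathfrak F}(x)=\{y\mid xR^*_{\mathfrak F}y\}$. An element $x$ of a subset $V\subseteq W$ is a maximal element of $V$ if for all $y\in V$, $xR^*_{\mathfrak F}y$ implies $yR^*_{\mathfrak F}x$. *)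

(* Defs.v *)
From Stdlib Require Import Relations List.
From mathcomp Require Import all_boot.
Set Implicit Arguments. Unset Strict Implicit. Unset Printing Implicit Defensive.

Inductive form (n : nat) : Type :=
| Var : nat -> form n
| Bot : form n
| Imp : form n -> form n -> form n
| Dia : 'I_n -> form n -> form n.
Arguments Bot {n}.

Section Syntax.
Variable n : nat.
Definition Neg (a : form n) : form n := Imp a Bot.
Definition Top : form n := Neg Bot.
Definition Or (a b : form n) : form n := Imp (Neg a) b.
Definition And (a b : form n) : form n := Neg (Imp a (Neg b)).

Definition bigOr (l : seq (form n)) : form n := foldr Or Bot l.
Definition bigAnd (l : seq (form n)) : form n := foldr And Top l.

Fixpoint subst (s : nat -> form n) (f : form n) : form n :=
  match f with
  | Var j => s j
  | Bot => Bot
  | Imp a b => Imp (subst s a) (subst s b)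
  | Dia i a => Dia i (subst s a)
  end.

Fixpoint peval (v : form n -> bool) (f : form n) : bool :=
  match f with
  | Var _ => v f
  | Bot => false
  | Imp a b => (peval v a ==> peval v b)
  | Dia _ _ => v f
  end.
Definition tautology (f : form n) : Prop := forall v, peval v f = true.

Definition normal_logic (L : form n -> Prop) : Prop :=
  (forall f, tautology f -> L f) /\
      (forall i : 'I_n, L (Imp (Dia i (Or (Var n 0) (Var n 1)))
                             (Or (Dia i (Var n 0)) (Dia i (Var n 1))))) /\
      (forall i : 'I_n, L (Neg (Dia i Bot))) /\
      (forall a b, L (Imp a b) -> L a -> L b) /\
      (forall s f, L f -> L (subst s f)) /\
      (forall (i : 'I_n) a b, L (Imp a b) -> L (Imp (Dia i a) (Dia i b))).

Definition DiaAny (f : form n) : form n := bigOr [seq Dia j f | j <- enum 'I_n].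
Fixpoint DiaPow (m : nat) (f : form n) : form n :=
  match m with
  | 0 => f
  | m'.+1 => DiaPow m' (DiaAny f)
  end.
Definition DiaLe (m : nat) (f : form n) : form n :=
  bigOr [seq DiaPow i f | i <- iota 0 m.+1].

Definition pretransitive (L : form n -> Prop) : Prop :=
  exists m, L (Imp (DiaPow m.+1 (Var n 0)) (DiaLe m (Var n 0))).

Definition consistent_logic (L : form n -> Prop) : Prop := ~ L Bot.

Inductive natw : Type := Fin of nat | Omega.
Definition var_ok (k : natw) (j : nat) : Prop :=
  match k with Fin k' => j < k' | Omega => True end.

Fixpoint kform (k : natw) (f : form n) : Prop :=
  match f with
  | Var j => var_ok k j
  | Bot => True
  | Imp a b => kform k a /\ kform k b
  | Dia _ a => kform k a
  end.

Definition Lconsistent (L : form n -> Prop) (G : form n -> Prop) : Prop :=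
  forall l : seq (form n), List.Forall G l -> ~ L (Neg (bigAnd l)).

Definition maxcons (L : form n -> Prop) (k : natw) (G : form n -> Prop) : Prop :=
  [/\ (forall f, G f -> kform k f),
      Lconsistent L G &
      (forall f, kform k f -> ~ G f ->
         ~ Lconsistent L (fun g => G g \/ g = f))].

Definition cpoint (L : form n -> Prop) (k : natw) : Type :=
  {G : form n -> Prop | maxcons L k G}.

Definition crel (L : form n -> Prop) (k : natw) (i : 'I_n)
  (x y : cpoint L k) : Prop :=
  forall f, kform k f -> proj1_sig y f -> proj1_sig x (Dia i f).

Definition crel_any (L : form n -> Prop) (k : natw) (x y : cpoint L k) : Prop :=
  exists i : 'I_n, @crel L k i x y.

Definition crel_star (L : form n -> Prop) (k : natw) : relation (cpoint L k) :=
  clos_refl_trans (cpoint L k) (@crel_any L k).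

Definition max_elem (L : form n -> Prop) (k : natw) (V : cpoint L k -> Prop)
  (x : cpoint L k) : Prop :=
  V x /\ forall y, V y -> @crel_star L k x y -> @crel_star L k y x.
End Syntax.
Arguments crel {n} L k i x y.
Arguments crel_any {n} L k x y.
Arguments crel_star {n} L k _ _.
Arguments max_elem {n} L k V x.
Arguments cpoint {n} L k.

(* Main.v *)
Require Import Defs.
From Stdlib Require Import Relations.
From Stdlib Require Import Classical ClassicalEpsilon FunctionalExtensionality PropExtensionality ProofIrrelevance.
From mathcomp Require Import all_boot.
Set Implicit Arguments. Unset Strict Implicit. Unset Printing Implicit Defensive.

Lemma memIn (T : eqType) (x : T) s : x \in s -> List.In x s.
Proof. elim: s => [|a s IH] //=; rewrite inE => /orP [/eqP ->|/IH]; by [left|right]. Qed.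

Lemma Inmem (T : eqType) (x : T) s : List.In x s -> x \in s.
Proof. elim: s => [|a s IH] //= [->|/IH H]; rewrite inE ?eqxx ?H ?orbT //. Qed.
Lemma In_map (A B : Type) (h : A -> B) x s : List.In x s -> List.In (h x) (map h s).
Proof. elim: s => [|a s IH] //= [->|/IH]; by [left|right]. Qed.
Lemma In_mapP (A B : Type) (h : A -> B) y s :
  List.In y (map h s) -> exists x, h x = y /\ List.In x s.
Proof.
elim: s => [|a s IH] //= [<-|/IH [x [H1 H2]]]; first by exists a; split; [|left].
by exists x; split; [|right].
Qed.

Fixpoint enc n (f : form n) : GenTree.tree nat := match f with
 | Var j => GenTree.Leaf j
 | Bot => GenTree.Node 0 [::]
 | Imp a b => GenTree.Node 1 [:: enc a; enc b]
 | Dia i a => GenTree.Node 2 [:: GenTree.Leaf (val i); enc a] end.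
Fixpoint dec n (t : GenTree.tree nat) : option (form n) := match t with
 | GenTree.Leaf j => Some (Var n j)
 | GenTree.Node 0 [::] => Some Bot
 | GenTree.Node 1 [:: a; b] => match dec n a, dec n b with Some a', Some b' => Some (Imp a' b') | _, _ => None end
 | GenTree.Node 2 [:: GenTree.Leaf j; a] => match insub j, dec n a with Some i, Some a' => Some (Dia i a') | _, _ => None end
 | _ => None end.
Lemma decK n : pcancel (@enc n) (dec n).
Proof. elim=> [j| |a IHa b IHb|i a IH] //=; first by rewrite IHa IHb. by rewrite valK IH. Qed.
Definition fenum n (i : nat) : option (form n) := obind (dec n) (unpickle i).
Lemma fenumK n (f : form n) : fenum n (pickle (enc f)) = Some f.
Proof. by rewrite /fenum pickleK /= decK. Qed.

Section Proof.
Variable n : nat.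
Variable L : form n -> Prop.
Hypothesis HL : normal_logic L.
Local Notation F := (form n).
Implicit Types (a b c g f : F) (l : seq F).

Lemma Ltaut f : tautology f -> L f. Proof. by case: HL => H _; exact: H. Qed.
Lemma Lmp a b : L (Imp a b) -> L a -> L b.
Proof. by case: HL => _ [_ [_ [H _]]]; exact: H. Qed.
Lemma Lsubst s f : L f -> L (subst s f).
Proof. by case: HL => _ [_ [_ [_ [H _]]]]; exact: H. Qed.
Lemma Lmono i a b : L (Imp a b) -> L (Imp (Dia i a) (Dia i b)).
Proof. by case: HL => _ [_ [_ [_ [_ H]]]]; exact: H. Qed.
Lemma Ldiabot i : L (Imp (Dia i Bot) Bot).
Proof. by case: HL => _ [_ [H _]]; exact: H. Qed.
Lemma Ldiaor i a b : L (Imp (Dia i (Or a b)) (Or (Dia i a) (Dia i b))).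
Proof.
case: HL => _ [H _].
exact: (Lsubst (fun j => if j is 0 then a else if j is 1 then b else Var n j) (H i)).
Qed.

Lemma pv_and (v : F -> bool) (a b : F) : peval v (And a b) = peval v a && peval v b.
Proof. by rewrite /=; case: (peval v a); case: (peval v b). Qed.
Lemma pv_or (v : F -> bool) (a b : F) : peval v (Or a b) = peval v a || peval v b.
Proof. by rewrite /=; case: (peval v a); case: (peval v b). Qed.
Lemma pv_neg (v : F -> bool) (a : F) : peval v (Neg a) = ~~ peval v a.
Proof. by rewrite /=; case: (peval v a). Qed.
Lemma pv_bigAnd (v : F -> bool) (l : seq F) : peval v (bigAnd l) = all (peval v) l.
Proof. elim: l => [|a l IH] //=. by rewrite -IH -pv_and. Qed.
Lemma pv_bigOr (v : F -> bool) (l : seq F) : peval v (bigOr l) = has (peval v) l.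
Proof. elim: l => [|a l IH] //=. by rewrite -IH -pv_or. Qed.

Lemma pv_imp (v : F -> bool) (a b : F) : peval v (Imp a b) = peval v a ==> peval v b.
Proof. by []. Qed.
Lemma pv_bot (v : F -> bool) : peval v Bot = false. Proof. by []. Qed.
Arguments peval : simpl never.
Lemma pv_top (v : F -> bool) : peval v (Top n) = true. Proof. by []. Qed.
Ltac pv := repeat (first [rewrite pv_or | rewrite pv_and | rewrite pv_neg | rewrite pv_top
  | rewrite pv_bigAnd | rewrite pv_bigOr | rewrite pv_bot | rewrite pv_imp]).

Lemma hasIn (v : F -> bool) (l : seq F) g : List.In g l -> peval v g -> has (peval v) l.
Proof. elim: l => [|a l IH] //= [->|/IH H] Hg; first by rewrite Hg. by rewrite H // orbT. Qed.
Lemma allIn (v : F -> bool) (l : seq F) g : List.In g l -> all (peval v) l -> peval v g.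
Proof. elim: l => [|a l IH] //= [->|/IH H] /andP [H1 H2] //. exact: H. Qed.
Lemma hasEx (v : F -> bool) (l : seq F) : has (peval v) l -> exists g, List.In g l /\ peval v g.
Proof.
elim: l => [|a l IH] //= /orP [H|/IH [g [H1 H2]]]; first by exists a; split; [left|].
by exists g; split; [right|].
Qed.

Lemma Lsem1 a b : (forall v, peval v a -> peval v b) -> L a -> L b.
Proof. move=> H; apply: Lmp; apply: Ltaut => v; pv; apply/implyP; exact: H. Qed.
Lemma Lsem2 a b c : (forall v, peval v a -> peval v b -> peval v c) -> L a -> L b -> L c.
Proof.
move=> H Ha Hb; apply: (Lmp _ Hb); apply: (Lmp _ Ha).
apply: Ltaut => v; pv; apply/implyP => Hva; apply/implyP; exact: H.
Qed.
Lemma Limp_sem a b : (forall v, peval v a -> peval v b) -> L (Imp a b).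
Proof. move=> H; apply: Ltaut => v; pv; apply/implyP; exact: H. Qed.
Lemma Limp_trans a b c : L (Imp a b) -> L (Imp b c) -> L (Imp a c).
Proof.
apply: Lsem2 => v; pv => /implyP H1 /implyP H2; apply/implyP => H; exact: H2 (H1 H).
Qed.

Lemma bigOr_elim (l : seq F) g : (forall f, List.In f l -> L (Imp f g)) -> L (Imp (bigOr l) g).
Proof.
elim: l => [|a l IH] H /=; first by apply: Limp_sem.
have H1 := H a (or_introl erefl).
have H2 : L (Imp (bigOr l) g) by apply: IH => f Hf; apply: H; right.
apply: (Lsem2 _ H1 H2) => v; pv => /implyP A /implyP B; apply/implyP; pv => /=.
by case/orP => [/A|/B].
Qed.
Lemma bigOr_intro (l : seq F) g : List.In g l -> L (Imp g (bigOr l)).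
Proof. move=> Hg; apply: Limp_sem => v H; pv; exact: hasIn Hg H. Qed.

Lemma dia_bigOr i (l : seq F) : L (Imp (Dia i (bigOr l)) (bigOr [seq Dia i f | f <- l])).
Proof.
elim: l => [|a l IH] /=; first exact: Ldiabot.
apply: (Limp_trans (Ldiaor i a (bigOr l))).
apply: (Lsem1 _ IH) => v; pv => /implyP H; apply/implyP; pv.
by case/orP => [->//|/H ->]; rewrite orbT.
Qed.


Lemma DiaAny_intro i a : L (Imp (Dia i a) (DiaAny a)).
Proof.
apply: bigOr_intro. apply: (@In_map _ _ (fun i => Dia i a)). apply: memIn. by rewrite mem_enum.
Qed.
Lemma DiaAny_mono a b : L (Imp a b) -> L (Imp (DiaAny a) (DiaAny b)).
Proof.
move=> H; apply: bigOr_elim => f Hf; case: (In_mapP Hf) => i [<- _].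
exact: Limp_trans (Lmono i H) (DiaAny_intro i b).
Qed.
Lemma DiaPow_mono j a b : L (Imp a b) -> L (Imp (DiaPow j a) (DiaPow j b)).
Proof. elim: j a b => [|j IH] a b H //=. apply: IH. exact: DiaAny_mono. Qed.
Lemma DiaPowS j a : DiaPow j.+1 a = DiaAny (DiaPow j a).
Proof. elim: j a => [|j IH] a //=. by rewrite -IH. Qed.
Lemma DiaLe_mono m a b : L (Imp a b) -> L (Imp (DiaLe m a) (DiaLe m b)).
Proof.
move=> H; apply: bigOr_elim => f Hf; case: (In_mapP Hf) => j [<- Hj].
apply: Limp_trans (DiaPow_mono j H) _.
apply: bigOr_intro; exact: (@In_map _ _ (fun i => DiaPow i b) j _ Hj).
Qed.

Lemma subst_bigOr s l : subst s (bigOr l) = bigOr [seq subst s f | f <- l].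
Proof. elim: l => [|a l IH] //=. by rewrite -IH. Qed.
Lemma subst_DiaPow s j a : subst s (DiaPow j a) = DiaPow j (subst s a).
Proof.
elim: j a => [|j IH] a //=. rewrite IH /DiaAny subst_bigOr -map_comp. by [].
Qed.
Lemma subst_DiaLe s m a : subst s (DiaLe m a) = DiaLe m (subst s a).
Proof.
rewrite /DiaLe subst_bigOr -map_comp. apply: congr1; apply: eq_map => j /=.
exact: subst_DiaPow.
Qed.

Variable m : nat.
Hypothesis Hm : L (Imp (DiaPow m.+1 (Var n 0)) (DiaLe m (Var n 0))).

Lemma pretr a : L (Imp (DiaPow m.+1 a) (DiaLe m a)).
Proof.
pose s := fun j => if j is 0 then a else Var n j.
have H := Lsubst s Hm.
change (L (Imp (subst s (DiaPow m.+1 (Var n 0))) (subst s (DiaLe m (Var n 0))))) in H.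
by rewrite subst_DiaPow subst_DiaLe in H.
Qed.

Local Notation M := (DiaLe m).

Lemma M_refl a : L (Imp a (M a)).
Proof. apply: (@bigOr_intro _ (DiaPow 0 a)). by left. Qed.

Lemma iota_In j k : j < k -> List.In j (iota 0 k).
Proof. move=> H; apply: memIn; by rewrite mem_iota. Qed.
Lemma In_iota j k : List.In j (iota 0 k) -> j < k.
Proof. by move/Inmem; rewrite mem_iota. Qed.

Lemma dia_M i a : L (Imp (Dia i (M a)) (M a)).
Proof.
apply: Limp_trans (dia_bigOr i _) _.
apply: bigOr_elim => f Hf; case: (In_mapP Hf) => g [<- Hg]; case: (In_mapP Hg) => j [<- Hj].
apply: Limp_trans (DiaAny_intro i _) _. rewrite -DiaPowS.
have := In_iota Hj; rewrite ltnS leq_eqVlt => /orP [/eqP ->|Hjm].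
  exact: pretr.
apply: bigOr_intro; apply: (@In_map _ _ (fun i => DiaPow i a)); exact: iota_In.
Qed.
Lemma DiaAny_M a : L (Imp (DiaAny (M a)) (M a)).
Proof. apply: bigOr_elim => f Hf; case: (In_mapP Hf) => i [<- _]; exact: dia_M. Qed.
Lemma DiaPow_M j a : L (Imp (DiaPow j (M a)) (M a)).
Proof.
elim: j => [|j IH] /=; first by apply: Limp_sem.
apply: Limp_trans IH; apply: DiaPow_mono; exact: DiaAny_M.
Qed.
Lemma MM a : L (Imp (M (M a)) (M a)).
Proof. apply: bigOr_elim => f Hf; case: (In_mapP Hf) => j [<- _]; exact: DiaPow_M. Qed.


Variable k : natw.
Local Notation kf := (kform k).

Lemma kf_Neg a : kf a -> kf (Neg a). Proof. by move=> H; split. Qed.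
Lemma kf_Or a b : kf a -> kf b -> kf (Or a b). Proof. by move=> H1 H2; cbn; tauto. Qed.
Lemma kf_And a b : kf a -> kf b -> kf (And a b). Proof. by move=> H1 H2; cbn; tauto. Qed.
Lemma kf_bigAnd l : List.Forall kf l -> kf (bigAnd l).
Proof. elim=> [|a l' Ha Hl IH] /=; first by cbn. exact: kf_And. Qed.
Lemma kf_bigOr l : List.Forall kf l -> kf (bigOr l).
Proof. elim=> [|a l' Ha Hl IH] /=; first by cbn. exact: kf_Or. Qed.
Lemma Forall_map (A : Type) (P : A -> Prop) (Q : F -> Prop) (h : A -> F) s :
  (forall x, P x -> Q (h x)) -> List.Forall P s -> List.Forall Q (map h s).
Proof. move=> H; elim=> [|a s' Ha Hs IH] /=; constructor; auto. Qed.
Lemma Forall_In (A : Type) (P : A -> Prop) s : (forall x, List.In x s -> P x) -> List.Forall P s.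
Proof.
elim: s => [|a s IH] H; constructor; first by apply: H; left.
by apply: IH => x Hx; apply: H; right.
Qed.
Lemma Forall_In' (A : Type) (P : A -> Prop) s x : List.Forall P s -> List.In x s -> P x.
Proof. elim=> [|a s' Ha Hs IH] //= [<-|/IH] //. Qed.
Lemma kf_DiaAny a : kf a -> kf (DiaAny a).
Proof. move=> H; apply: kf_bigOr; apply: Forall_In => f Hf; case: (In_mapP Hf) => i [<- _]. exact: H. Qed.
Lemma kf_DiaPow j a : kf a -> kf (DiaPow j a).
Proof. elim: j a => [|j IH] a H //=. apply: IH; exact: kf_DiaAny. Qed.
Lemma kf_DiaLe j a : kf a -> kf (DiaLe j a).
Proof. move=> H; apply: kf_bigOr; apply: Forall_In => f Hf; case: (In_mapP Hf) => i [<- _]. exact: kf_DiaPow. Qed.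
Lemma Forall_cat (P : F -> Prop) l1 l2 : List.Forall P l1 -> List.Forall P l2 -> List.Forall P (l1 ++ l2).
Proof. elim=> [|a s' Ha Hs IH] //= H2; constructor; auto. Qed.
Lemma Forall_catl (P : F -> Prop) l1 l2 : List.Forall P (l1 ++ l2) -> List.Forall P l1.
Proof. elim: l1 => [|a l1 IH] //= H; inversion H; constructor; auto. Qed.
Lemma Forall_catr (P : F -> Prop) l1 l2 : List.Forall P (l1 ++ l2) -> List.Forall P l2.
Proof. elim: l1 => [|a l1 IH] //= H; inversion H; auto. Qed.

Lemma split1 (G : F -> Prop) f l : List.Forall (fun g => G g \/ g = f) l ->
  exists l', List.Forall G l' /\ forall v, peval v (bigAnd l') -> peval v f -> peval v (bigAnd l).
Proof.
elim=> [|g l0 Hg Hl [l' [H1 H2]]]; first by exists [::]; split => // v; pv.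
case: Hg => [Hg|->].
  exists (g :: l'); split; first by constructor.
  by move=> v; pv => /= /andP [-> H3] Hf; rewrite /= -pv_bigAnd H2 // pv_bigAnd.
exists l'; split => // v H3 Hf; pv => /=; rewrite Hf /= -pv_bigAnd; exact: H2.
Qed.

Lemma split2 (A B : F -> Prop) l : List.Forall (fun g => A g \/ exists h, g = Neg h /\ B h) l ->
  exists l1 l2, List.Forall A l1 /\ List.Forall B l2 /\
   forall v, peval v (bigAnd l1) -> ~~ has (peval v) l2 -> peval v (bigAnd l).
Proof.
elim=> [|g l0 Hg Hl [l1 [l2 [H1 [H2 H3]]]]]; first by exists [::], [::]; split => // v; pv.
case: Hg => [Hg|[h [-> Hh]]].
  exists (g :: l1); exists l2; split; first by constructor.
  split => // v; pv => /= /andP [-> H4] H5; rewrite /= -pv_bigAnd; by apply: H3 => //; rewrite pv_bigAnd.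
exists l1; exists (h :: l2); split => //; split; first by constructor.
move=> v H4; rewrite /= negb_or => /andP [H5 H6]; pv => /=; rewrite H5 /= -pv_bigAnd; exact: H3.
Qed.

Section MC.
Variable G : F -> Prop.
Hypothesis HG : maxcons L k G.

Lemma mc_kf f : G f -> kf f. Proof. by case: HG => H _ _; apply: H. Qed.
Lemma mc_incons l : List.Forall G l -> L (Neg (bigAnd l)) -> False.
Proof. by case: HG => _ H _; apply: H. Qed.
Lemma mc_add f : kf f -> ~ G f -> exists l, List.Forall G l /\ L (Imp (bigAnd l) (Neg f)).
Proof.
case: HG => _ _ H3 Hf HGf; apply: NNPP => Hno.
apply: (H3 f Hf HGf) => l Hl HLl.
case: (split1 Hl) => l' [H1 H2]; apply: Hno; exists l'; split => //.
apply: (Lsem1 _ HLl) => v; pv => /negP H4; apply/implyP => H5; apply/negP => H6; apply: H4; move: (H2 v); pv => H7; exact: H7.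
Qed.
Lemma mc_der l f : List.Forall G l -> L (Imp (bigAnd l) f) -> kf f -> G f.
Proof.
move=> Hl HLf Hf; apply: NNPP => Hn.
case: (mc_add Hf Hn) => l' [H1 H2].
apply: (@mc_incons (l ++ l')); first exact: Forall_cat.
apply: (Lsem2 _ HLf H2) => v; pv => /implyP A /implyP B; rewrite all_cat.
apply/negP => /andP [/A C /B]; by rewrite C.
Qed.
Lemma mc_imp a b : G a -> L (Imp a b) -> kf b -> G b.
Proof.
move=> Ha Hab; apply: (@mc_der [:: a]); first by constructor.
apply: (Lsem1 _ Hab) => v; pv => /implyP H. move: H; case: (peval v a); case: (peval v b) => // H; exact: H.
Qed.
Lemma mc_or f : kf f -> G f \/ G (Neg f).
Proof.
move=> Hf; case: (classic (G f)) => H; [by left|right].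
case: (mc_add Hf H) => l [H1 H2]; exact: mc_der H1 H2 (kf_Neg Hf).
Qed.
Lemma mc_notboth f : G f -> G (Neg f) -> False.
Proof.
move=> H1 H2; apply: (@mc_incons [:: f; Neg f]); first by repeat constructor.
apply: Ltaut => v; pv => /=; by case: (peval v f).
Qed.
Lemma mc_bigAnd l : List.Forall G l -> G (bigAnd l).
Proof.
move=> Hl; apply: (mc_der Hl); first by apply: Limp_sem.
apply: kf_bigAnd; apply: List.Forall_impl Hl; exact: mc_kf.
Qed.
Lemma mc_bigOr l : G (bigOr l) -> List.Forall kf l -> exists f, List.In f l /\ G f.
Proof.
move=> H Hl; apply: NNPP => Hno.
have Hn : List.Forall G (map (@Neg n) l).
  apply: Forall_In => g Hg; case: (In_mapP Hg) => f [<- Hf].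
  case: (mc_or (Forall_In' Hl Hf)) => // Hf'; exfalso; apply: Hno; by exists f.
apply: (@mc_incons (bigOr l :: map (@Neg n) l)); first by constructor.
apply: Ltaut => v; pv => /=; rewrite orbF; apply/implyP => Ho.
case: (hasEx Ho) => f [Hf Hv]; apply/negP => Ha.
by have := allIn (In_map (@Neg n) Hf) Ha; rewrite pv_neg Hv.
Qed.
End MC.

Section Lind.
Variable Gam : F -> Prop.
Fixpoint ch i : F -> Prop := match i with
 | 0 => Gam
 | i'.+1 => fun g => ch i' g \/ exists f, fenum n i' = Some f /\ g = f /\ kf f /\
                        Lconsistent L (fun h => ch i' h \/ h = f)
 end.
Lemma ch_mono i j g : ch i g -> ch (j + i) g.
Proof. move=> H; elim: j => [|j IH] //; rewrite addSn /=; by left. Qed.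
Lemma ch_kf i g : (forall g, Gam g -> kf g) -> ch i g -> kf g.
Proof.
move=> HG; elim: i g => [|i IH] g /=; first exact: HG.
by case=> [/IH //|[f [_ [-> [Hf _]]]]].
Qed.
Lemma ch_cons i : Lconsistent L Gam -> Lconsistent L (ch i).
Proof.
move=> HC; elim: i => [|i IH] //= l Hl HLl.
case: (classic (exists f, fenum n i = Some f /\ kf f /\ Lconsistent L (fun h => ch i h \/ h = f)))
  => [[f [Ef [Kf Cf]]]|Hno].
  apply: (Cf l _ HLl); apply: List.Forall_impl Hl => g [H|[f' [Ef' [-> _]]]]; first by left.
  right; rewrite Ef in Ef'; by case: Ef'.
apply: (IH l _ HLl); apply: List.Forall_impl Hl => g [H|[f' [Ef' [-> [Kf' Cf']]]]] //.
exfalso; apply: Hno; by exists f'.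
Qed.
Lemma ch_list l : List.Forall (fun g => exists i, ch i g) l -> exists i, List.Forall (ch i) l.
Proof.
elim=> [|g l' [i1 H1] _ [i2 H2]]; first by exists 0.
exists (i2 + i1); constructor; first exact: ch_mono.
apply: List.Forall_impl H2 => h Hh; rewrite addnC; exact: ch_mono.
Qed.
Lemma lindenbaum : (forall g, Gam g -> kf g) -> Lconsistent L Gam ->
  exists G, maxcons L k G /\ forall g, Gam g -> G g.
Proof.
move=> HK HC; exists (fun g => exists i, ch i g); split; last by move=> g H; exists 0.
split.
- move=> f [i H]; exact: ch_kf H.
- move=> l Hl; case: (ch_list Hl) => i Hi; exact: ch_cons Hi.
- move=> f Hf Hnot Hc; apply: Hnot; exists (pickle (enc f)).+1; right; exists f.
  split; first exact: fenumK. split => //; split => //.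
  move=> l Hl; apply: Hc; apply: List.Forall_impl Hl => g [H|->]; last by right.
  by left; exists (pickle (enc f)).
Qed.
End Lind.

Lemma exist1 (x : F -> Prop) i (D : F -> Prop) : maxcons L k x -> (forall g, D g -> kf g) ->
  (forall l, List.Forall D l -> x (Dia i (bigAnd l))) ->
  exists y, maxcons L k y /\ (forall g, D g -> y g) /\ (forall f, kf f -> y f -> x (Dia i f)).
Proof.
move=> Hx HD Hdia.
pose Gm := fun g => D g \/ exists h, g = Neg h /\ (kf h /\ x (Neg (Dia i h))).
have Hk : forall g, Gm g -> kf g.
  move=> g [/HD //|[h [-> [Hh _]]]]; exact: kf_Neg.
have Hc : Lconsistent L Gm.
  move=> l Hl HLl.
  case: (split2 Hl) => l1 [l2 [H1 [H2 H3]]].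
  have E1 : L (Imp (bigAnd l1) (bigOr l2)).
    apply: (Lsem1 _ HLl) => v; move: (H3 v); pv => H7 H4.
    apply/implyP => H5; case E: (has (peval v) l2) => //.
    by rewrite (H7 H5 (negbT E)) in H4.
  have E2 := Limp_trans (Lmono i E1) (dia_bigOr i l2).
  have Hl2k : List.Forall kf l2 by apply: List.Forall_impl H2 => h [].
  have Hmk : List.Forall kf [seq Dia i f | f <- l2].
    by apply: (Forall_map _ Hl2k) => h Hh.
  have X := mc_imp Hx (Hdia l1 H1) E2 (kf_bigOr Hmk).
  case: (mc_bigOr Hx X Hmk) => f [Hf Hxf]; case: (In_mapP Hf) => h [Eh Hh]; subst f.
  case: (Forall_In' H2 Hh) => _ Hn; apply: (@mc_notboth x Hx (Dia i h)) => //.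
case: (lindenbaum Hk Hc) => y [Hy Hsub].
exists y; split => //; split; first by move=> g Hg; apply: Hsub; left.
move=> f Hf Hyf; case: (mc_or Hx (Hf : kf (Dia i f))) => // Hn; exfalso.
apply: (mc_notboth Hy Hyf); apply: Hsub; right; exists f; split => //.
Qed.


Section Pigeon.
Variables (A : Type) (D : F -> Prop) (Q : A -> seq F -> Prop).
Hypothesis Hanti : forall (q : A) l1 l2, List.Forall D l1 -> List.Forall D l2 ->
  Q q (l1 ++ l2) -> Q q l1 /\ Q q l2.
Lemma bad_list cs : (forall q, List.In q cs -> exists l, List.Forall D l /\ ~ Q q l) ->
  exists l, List.Forall D l /\ forall q, List.In q cs -> ~ Q q l.
Proof.
elim: cs => [|q cs IH] Hb; first by exists [::].
case: (Hb q (or_introl erefl)) => l1 [H1 H1'].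
case: IH => [q' Hc'|l2 [H2 H2']]; first by apply: Hb; right.
exists (l1 ++ l2); split; first exact: Forall_cat.
move=> q' [<-|Hc'] HQ; [apply: H1' | apply: (H2' q' Hc')]; by case: (Hanti H1 H2 HQ).
Qed.
Lemma pigeon cs : (forall l, List.Forall D l -> exists q, List.In q cs /\ Q q l) ->
  exists q, List.In q cs /\ forall l, List.Forall D l -> Q q l.
Proof.
move=> Hall; apply: NNPP => Hno.
have Hbad : forall q, List.In q cs -> exists l, List.Forall D l /\ ~ Q q l.
  move=> q Hc; apply: NNPP => H; apply: Hno; exists q; split => // l Hl.
  apply: NNPP => HQ; apply: H; by exists l.
case: (bad_list Hbad) => l [Hl Hn]; case: (Hall l Hl) => q [Hc HQ]; exact: Hn q Hc HQ.
Qed.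
End Pigeon.

Lemma cat_l l1 l2 : L (Imp (bigAnd (l1 ++ l2)) (bigAnd l1)).
Proof. apply: Limp_sem => v; pv; rewrite all_cat; by case/andP. Qed.
Lemma cat_r l1 l2 : L (Imp (bigAnd (l1 ++ l2)) (bigAnd l2)).
Proof. apply: Limp_sem => v; pv; rewrite all_cat; by case/andP. Qed.
Lemma Limp_and c a b : L (Imp c a) -> L (Imp c b) -> L (Imp c (And a b)).
Proof.
apply: Lsem2 => v; pv => /implyP H1 /implyP H2; apply/implyP => H; by rewrite H1 ?H2.
Qed.
Lemma kf_Forall (D : F -> Prop) l : (forall g, D g -> kf g) -> List.Forall D l -> kf (bigAnd l).
Proof. move=> HD Hl; apply: kf_bigAnd; exact: List.Forall_impl Hl. Qed.

Local Notation P := (cpoint L k).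

Lemma existj j : forall (x : P) (D : F -> Prop), (forall g, D g -> kf g) ->
  (forall l, List.Forall D l -> proj1_sig x (DiaPow j (bigAnd l))) ->
  exists y : P, (forall g, D g -> proj1_sig y g) /\ crel_star L k x y.
Proof.
elim: j => [|j IH] x D HD Hx.
  exists x; split; last exact: rt_refl.
  move=> g Hg; apply: (mc_imp (proj2_sig x) (Hx [:: g] _)); [by constructor | | exact: HD].
  apply: Limp_sem => v; pv => /=; by rewrite andbT.
have H1 : forall l, List.Forall D l -> exists i, List.In i (enum 'I_n) /\
    proj1_sig x (Dia i (DiaPow j (bigAnd l))).
  move=> l Hl; have := Hx l Hl; rewrite DiaPowS => Hxa.
  have Hk : kf (DiaPow j (bigAnd l)) by apply: kf_DiaPow; exact: kf_Forall Hl.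
  case: (mc_bigOr (proj2_sig x) Hxa _) => [|f [Hf Hxf]].
    apply: Forall_In => f Hf; case: (In_mapP Hf) => i [<- _]; exact: Hk.
  case: (In_mapP Hf) => i [Ei Hi]; subst f; by exists i.
case: (pigeon (Q := fun i l => proj1_sig x (Dia i (DiaPow j (bigAnd l)))) _ H1)
  => [i l1 l2 Hl1 Hl2 HQ | i [_ Hi]].
  split; apply: (mc_imp (proj2_sig x) HQ).
  - apply: Lmono; apply: DiaPow_mono; exact: cat_l.
  - apply: kf_DiaPow; exact: kf_Forall Hl1.
  - apply: Lmono; apply: DiaPow_mono; exact: cat_r.
  - apply: kf_DiaPow; exact: kf_Forall Hl2.
pose D' := fun g => exists l, List.Forall D l /\ g = DiaPow j (bigAnd l).
have HD' : forall g, D' g -> kf g.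
  move=> g [l [Hl ->]]; apply: kf_DiaPow; exact: kf_Forall Hl.
have Hcol : forall l', List.Forall D' l' -> exists l, List.Forall D l /\
    L (Imp (DiaPow j (bigAnd l)) (bigAnd l')).
  move=> l0'; elim=> [|g l' [l0 [Hl0 ->]] _ [l1 [Hl1 HL1]]].
    by exists [::]; split => //; apply: Limp_sem => v _; pv.
  exists (l0 ++ l1); split; first exact: Forall_cat.
  apply: Limp_and; first by apply: DiaPow_mono; exact: cat_l.
  apply: Limp_trans HL1; apply: DiaPow_mono; exact: cat_r.
have HD'x : forall l', List.Forall D' l' -> proj1_sig x (Dia i (bigAnd l')).
  move=> l' Hl'; case: (Hcol l' Hl') => l [Hl HLl].
  apply: (mc_imp (proj2_sig x) (Hi l Hl) (Lmono i HLl)).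
  exact: (kf_Forall HD' Hl').
case: (exist1 (proj2_sig x) HD' HD'x) => z [Hz [Hzsub Hzrel]].
case: (IH (exist _ z Hz) D HD) => [l Hl|y [Hy Hzy]].
  by apply: Hzsub; exists l.
exists y; split => //; apply: rt_trans Hzy; apply: rt_step; exists i; exact: Hzrel.
Qed.

Lemma existM (x : P) (D : F -> Prop) : (forall g, D g -> kf g) ->
  (forall l, List.Forall D l -> proj1_sig x (M (bigAnd l))) ->
  exists y : P, (forall g, D g -> proj1_sig y g) /\ crel_star L k x y.
Proof.
move=> HD Hx.
have H1 : forall l, List.Forall D l -> exists j, List.In j (iota 0 m.+1) /\
    proj1_sig x (DiaPow j (bigAnd l)).
  move=> l Hl; have Hxa := Hx l Hl.
  have Hk : kf (bigAnd l) by exact: kf_Forall Hl.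
  case: (mc_bigOr (proj2_sig x) Hxa _) => [|f [Hf Hxf]].
    apply: Forall_In => f Hf; case: (In_mapP Hf) => i [<- _]; exact: kf_DiaPow.
  case: (In_mapP Hf) => i [Ei Hi]; subst f; by exists i.
case: (pigeon (Q := fun j l => proj1_sig x (DiaPow j (bigAnd l))) _ H1)
  => [j l1 l2 Hl1 Hl2 HQ | j [_ Hj]].
  split; apply: (mc_imp (proj2_sig x) HQ).
  - apply: DiaPow_mono; exact: cat_l.
  - apply: kf_DiaPow; exact: kf_Forall Hl1.
  - apply: DiaPow_mono; exact: cat_r.
  - apply: kf_DiaPow; exact: kf_Forall Hl2.
exact: existj Hj.
Qed.

Lemma star_M (x y : P) : crel_star L k x y ->
  forall g, kf g -> proj1_sig y g -> proj1_sig x (M g).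
Proof.
elim=> {x y} [x y [i Hi]|x|x y z _ IH1 _ IH2] g Hg Hyg.
- have Hk := kf_DiaLe m Hg.
  have := Hi (M g) Hk (mc_imp (proj2_sig y) Hyg (M_refl g) Hk) => H.
  have H2 := mc_imp (proj2_sig x) H (dia_M i g) Hk. exact: H2.
- exact: (mc_imp (proj2_sig x) Hyg (M_refl g) (kf_DiaLe m Hg)).
- have Hk := kf_DiaLe m Hg.
  exact: (mc_imp (proj2_sig x) (IH1 _ Hk (IH2 g Hg Hyg)) (MM g) Hk).
Qed.


Definition stepA (X : F -> Prop) (A : seq F) (f : F) : seq F :=
  if excluded_middle_informative (kf f /\ X (M (bigAnd (A ++ [:: Neg (M f)]))))
  then A ++ [:: Neg (M f)] else A.
Fixpoint seqA (X : F -> Prop) (phi : F) (i : nat) : seq F :=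
  match i with
  | 0 => [:: phi]
  | i'.+1 => match fenum n i' with Some f => stepA X (seqA X phi i') f | None => seqA X phi i' end
  end.

Lemma In_catl (g : F) l1 l2 : List.In g l1 -> List.In g (l1 ++ l2).
Proof. elim: l1 => [|a l1 IH] //= [->|/IH]; by [left|right]. Qed.
Lemma In_catr (g : F) l1 l2 : List.In g l2 -> List.In g (l1 ++ l2).
Proof. elim: l1 => [|a l1 IH] //= H; right; exact: IH. Qed.
Lemma In_cat (g : F) l1 l2 : List.In g (l1 ++ l2) -> List.In g l1 \/ List.In g l2.
Proof.
elim: l1 => [|a l1 IH] /=; first by right.
case=> [->|/IH [H|H]]; [left; left| left; right| right] => //.
Qed.

Lemma stepA_sub X A f g : List.In g A -> List.In g (stepA X A f).
Proof. move=> H; rewrite /stepA; destruct excluded_middle_informative; [exact: In_catl|exact: H]. Qed.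
Lemma stepA_cases X A f g : List.In g (stepA X A f) -> List.In g A \/ (g = Neg (M f) /\ kf f).
Proof.
rewrite /stepA; destruct excluded_middle_informative as [[Hk Hx]|Hn]; move=> H; last by left.
case: (In_cat H) => [|[<-|[]]]; [by left|by right].
Qed.
Lemma stepA_spec X A f : List.In (Neg (M f)) (stepA X A f) \/
  ~ (kf f /\ X (M (bigAnd (A ++ [:: Neg (M f)])))).
Proof.
rewrite /stepA; destruct excluded_middle_informative as [H|H]; [left|by right].
by apply: In_catr; left.
Qed.
Lemma stepA_inv X A f : X (M (bigAnd A)) -> X (M (bigAnd (stepA X A f))).
Proof. move=> H0; rewrite /stepA; destruct excluded_middle_informative as [[Hk H]|Hn]; [exact H|exact H0]. Qed.

Lemma seqA_mono X phi i j g : List.In g (seqA X phi i) -> List.In g (seqA X phi (j + i)).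
Proof.
move=> H; elim: j => [|j IH] //; rewrite addSn /=.
case: (fenum n (j + i)) => // f; exact: stepA_sub.
Qed.
Lemma seqA_shape X phi i g : kf phi -> List.In g (seqA X phi i) ->
  g = phi \/ exists c, g = Neg (M c) /\ kf c.
Proof.
move=> Hp; elim: i g => [|i IH] g /=; first by case=> [<-|[]]; left.
case: (fenum n i) => [f|]; last exact: IH.
move=> H; case: (stepA_cases H) => [/IH //|[-> Hk]]; right; by exists f.
Qed.
Lemma seqA_kf X phi i : kf phi -> List.Forall kf (seqA X phi i).
Proof.
move=> Hp; apply: Forall_In => g Hg; case: (seqA_shape Hp Hg) => [->|[c [-> Hc]]] //.
exact: kf_Neg (kf_DiaLe m Hc).
Qed.
Lemma seqA_inv (X : F -> Prop) phi i : X (M (bigAnd [:: phi])) -> X (M (bigAnd (seqA X phi i))).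
Proof. move=> H; elim: i => [|i IH] //=; case: (fenum n i) => // f; exact: stepA_inv. Qed.

Lemma In_all (v : F -> bool) l1 l2 : (forall g, List.In g l2 -> List.In g l1) ->
  all (peval v) l1 -> all (peval v) l2.
Proof.
move=> H Ha; elim: l2 H => [|g l2 IH] H //=.
rewrite (allIn (H g (or_introl erefl)) Ha) IH // => h Hh; apply: H; by right.
Qed.

Lemma mc_ext (y w : P) : (forall g, proj1_sig y g -> proj1_sig w g) -> y = w.
Proof.
case: y w => [y Hy] [w Hw] /= H.
have E : y = w.
  apply: functional_extensionality => g; apply: propositional_extensionality; split; first exact: H.
  move=> Hwg; case: (mc_or Hy (mc_kf Hw Hwg)) => // Hn; exfalso.
  exact: (mc_notboth Hw Hwg (H _ Hn)).
subst w; f_equal; exact: proof_irrelevance.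
Qed.

Lemma mainlem (x : P) phi : kf phi -> proj1_sig x phi ->
  exists y : P, max_elem L k (fun z : P => crel_star L k x z /\ proj1_sig z phi) y.
Proof.
move=> Hphi Hx.
pose X := proj1_sig x.
pose A := seqA X phi.
have HA0 : X (M (bigAnd [:: phi])).
  apply: (mc_imp (proj2_sig x) (mc_bigAnd (proj2_sig x) _) (M_refl _)); first by constructor.
  apply: kf_DiaLe; apply: kf_bigAnd; by constructor.
have HAinv : forall i, X (M (bigAnd (A i))) := fun i => seqA_inv i HA0.
pose Gm := fun g => exists i, List.In g (A i).
have HGk : forall g, Gm g -> kf g.
  move=> g [i Hi]; exact: Forall_In' (seqA_kf X i Hphi) Hi.
have Hlist : forall l, List.Forall Gm l -> exists i, forall g, List.In g l -> List.In g (A i).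
  move=> l0; elim=> [|g l [i1 H1] _ [i2 H2]]; first by exists 0.
  exists (i2 + i1) => h [<-|Hh]; first exact: seqA_mono.
  rewrite addnC; apply: seqA_mono; exact: H2.
case: (@existM x Gm HGk) => [l Hl|y [Hy Hxy]].
  case: (Hlist l Hl) => i Hi.
  apply: (mc_imp (proj2_sig x) (HAinv i)); last by apply: kf_DiaLe; exact: kf_Forall Hl.
  apply: DiaLe_mono; apply: Limp_sem => v; pv; exact: In_all.
exists y; split.
  split => //; apply: Hy; rewrite /Gm; exists 0; by left.
move=> z [Hxz Hzphi] Hyz.
have Hpers : forall c, kf c -> proj1_sig y (Neg (M c)) -> proj1_sig z (Neg (M c)).
  move=> c Hc Hyc; case: (mc_or (proj2_sig z) (kf_DiaLe m Hc)) => // Hzc; exfalso.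
  have H := star_M Hyz (kf_DiaLe m Hc) Hzc.
  apply: (mc_notboth (proj2_sig y) _ Hyc).
  exact: (mc_imp (proj2_sig y) H (MM c) (kf_DiaLe m Hc)).
case: (@existM z (proj1_sig y) (mc_kf (proj2_sig y))) => [l Hl|w [Hw Hzw]].
  have Hyl := mc_bigAnd (proj2_sig y) Hl.
  have Hkl := mc_kf (proj2_sig y) Hyl.
  move: Hyl Hkl; set psi := bigAnd l => Hyl Hkl.
  case: (mc_or (proj2_sig z) (kf_DiaLe m Hkl)) => // Hzn; exfalso.
  pose i := pickle (enc psi).
  have Hstep : A i.+1 = stepA X (A i) psi by rewrite /A /= fenumK.
  case: (stepA_spec X (A i) psi) => [Hin|Hno].
    apply: (@mc_notboth _ (proj2_sig y) (M psi)).
      exact: (mc_imp (proj2_sig y) Hyl (M_refl psi) (kf_DiaLe m Hkl)).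
    apply: Hy; rewrite /Gm; exists i.+1; by rewrite Hstep.
  apply: Hno; split => //.
  apply: (star_M Hxz).
    apply: kf_bigAnd; apply: Forall_cat; first exact: seqA_kf.
    by constructor; [exact: kf_Neg (kf_DiaLe m Hkl)| constructor].
  apply: (mc_bigAnd (proj2_sig z)); apply: Forall_cat; last by repeat constructor.
  apply: Forall_In => g Hg; case: (seqA_shape Hphi Hg) => [->|[c [Ec Hc]]] //.
  subst g; apply: Hpers => //; apply: Hy; rewrite /Gm; by exists i.
by rewrite (mc_ext Hw).
Qed.

End Proof.


Theorem proposition3p2 (n : nat) (L : form n -> Prop)
  (HL : normal_logic L) (Hcons : consistent_logic L) (Hpre : pretransitive L)
  (k : natw) (x : cpoint L k) (phi : form n)
  (Hphi : kform k phi) (Hx : proj1_sig x phi) :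
  exists y : cpoint L k,
    max_elem L k (fun z : cpoint L k => crel_star L k x z /\ proj1_sig z phi) y.
Proof.
case: Hpre => m Hm.
exact: (mainlem HL Hm Hphi Hx).
Qed.
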